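(* Let $n\ge 6$, let $D\subseteq[n]\setminus\{1,2,3,4\}$ with $|D|\ge2$, and let $H_2$ be the $3$-graph on $[n]$ with edge set $\big(E(B(2,n-2))\setminus\{2ij:i,j\in D\}\big)\cup\{34i: i\in D\}$. Then $\lambda(H_2)\le\frac{\sqrt3}{18}$.
   Context: $B(2,n-2)$ is the $3$-graph on $[n]$ whose edge set is $\{e\in\binom{[n]}3: e\cap\{1,2\}\neq\emptyset\}$. For a $3$-graph $G$ on $[n]$, $\lambda(G)=\max\{\sum_{e\in E(G)}\prod_{i\in e}x_i:\sum_i x_i=1,x_i\ge0\}$. *)

(* Defs.v *)
(* Vertex set [n] = {1,...,n} is modelled by 'I_n,
   vertex i : 'I_n carries the label lab i = i + 1. *)
From HB Require Import structures.
From mathcomp Require Import all_boot all_order all_algebra.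
Set Implicit Arguments. Unset Strict Implicit. Unset Printing Implicit Defensive.
Import Order.TTheory GRing.Theory Num.Theory.
Local Open Scope ring_scope.

Definition lab (n : nat) (i : 'I_n) : nat := (val i).+1.


Definition B2 (n : nat) : {set {set 'I_n}} :=
  [set e : {set 'I_n} | (#|e| == 3)%N &&
     [exists i in e, (lab i == 1)%N || (lab i == 2)%N]].

Definition H2 (n : nat) (D : {set 'I_n}) : {set {set 'I_n}} :=
  [set e : {set 'I_n} |
     ((e \in B2 n) &&
       ~~ [exists v : 'I_n, exists i in D, exists j in D,
             [&& (lab v == 2)%N, i != j & e == [set v; i; j]]])
  || [exists u : 'I_n, exists w : 'I_n, exists i in D,
             [&& (lab u == 3)%N, (lab w == 4)%N & e == [set u; w; i]]]].

Definition lagr_val (R : numDomainType) n (G : {set {set 'I_n}}) (x : 'I_n -> R) : R :=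
  \sum_(e in G) \prod_(i in e) x i.

Definition in_simplex (R : numDomainType) n (x : 'I_n -> R) : Prop :=
  (forall i, 0 <= x i) /\ \sum_i x i = 1.

(* Main.v *)
Require Import Defs.
From HB Require Import structures.
From mathcomp Require Import all_boot all_order all_algebra.
From mathcomp Require Import ring lra zify.
Set Implicit Arguments. Unset Strict Implicit. Unset Printing Implicit Defensive.
Import Order.TTheory GRing.Theory Num.Theory.
Local Open Scope ring_scope.

Lemma fbound (R : rcfType) (t : R) : 0 <= t -> t <= 1/2 ->
  t*(1-t)*(1-2*t) <= Num.sqrt 3 / 18.
Proof.
move=> t0 t1.
have c0 : 0 <= Num.sqrt (3:R) by rewrite sqrtr_ge0.
have c2 : Num.sqrt (3:R) ^+ 2 = 3 by rewrite sqr_sqrtr.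
set c := Num.sqrt 3 in c0 c2 *.
have c3 : c ^+ 3 = 3 * c by rewrite exprS c2 mulrC.
have ct : c ^+ 2 * t = 3 * t by rewrite c2.
have ct2 : c ^+ 2 * t^+2 = 3 * t^+2 by rewrite c2.
have H : 0 <= (t-(3-c)/6)^+2*(1/2+c/3-t).
  apply: mulr_ge0; first exact: sqr_ge0. nra.
nra.
Qed.

Lemma gbound (R : rcfType) (a b S : R) : 0 <= a -> 0 <= b -> 0 <= S -> a+b+S = 1 ->
  a*b*S + (a+b)*S^+2/2 <= Num.sqrt 3 / 18.
Proof.
move=> a0 b0 S0 e.
have q1 : 0 <= (a+b)/2 by lra.
have q2 : (a+b)/2 <= 1/2 by lra.
have := @fbound R ((a+b)/2) q1 q2.
have : a*b <= (a+b)^+2/4 by have := sqr_ge0 (a-b); nra.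
move=> h1 h2. apply: le_trans h2.
have -> : S = 1 - a - b by lra.
nra.
Qed.

Lemma polyP (R : realFieldType) (s : R) : 0 <= s -> s <= 1/2 ->
  0 <= 143/675 - 893/675 * s + 7/3 * s^+2 - 1/27 * s^+3 - 155/108 * s^+4.
Proof.
move=> h0 h1.
have h2 : 0 <= s * (1/2 - s) by nra.
have h3 : 0 <= (s - 1/3)^+2 by exact: sqr_ge0.
have h4 : 0 <= s * (1/2 - s) * (s-1/3)^+2 by apply: mulr_ge0.
have h5 : 0 <= s^+2 * (1/2 - s)  by nra.
have h6 : 0 <= s * (1/2 - s)^+2  by nra.
nra.
Qed.

Lemma caseB (R : realFieldType) (a b p d S : R) :
  0 <= a -> 0 <= b -> 0 <= p -> 0 <= d -> p + d <= S -> a+b+S = 1 -> a + b <= d ->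
  a*b*S + (a+b)*S^+2/2 - (a+b)*(p ^+ 2)/4 - b*(d ^+ 2)/2 + (p ^+ 2)*d/4 <= 9/100.
Proof.
move=> a0 b0 p0 d0 hS e hd.
set s := a + b.
set K := s*S - s^+2/2.
have es : s = a + b by [].
have eK : K = s*S - s^+2/2 by [].
clearbody s K.
have S0 : 0 < S by nra.
have h1 : a*b*S - b*d^+2/2 <= K^+2/(4*S).
  rewrite ler_pdivlMr; last by nra.
  have : 0 <= (K - 2*b*S)^+2 by exact: sqr_ge0.
  have : b * s^+2 <= b * d^+2.
    apply: ler_wpM2l => //. rewrite es; apply: lerXn2r; rewrite ?nnegrE; lra.
  rewrite eK es; have -> : a = (a+b) - b by ring. nra.
have h2 : 27 * (p/2)^+2 * (d - s) <= (2*(p/2) + (d-s))^+3.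
  have : 0 <= (p/2 - (d-s))^+2 * (8*(p/2) + (d-s)).
    apply: mulr_ge0; first exact: sqr_ge0. lra.
  nra.
have h3' : K^+2 <= (9/100 - s*S^+2/2 - (1-2*s)^+3/27) * (4*S).
  rewrite eK. have -> : S = 1 - s by lra.
  have : s <= 1/2 by lra. have : 0 <= s by lra.
  move=> hs0 hs1; have hp := @polyP _ s hs0 hs1; nra.
have h3 : K^+2/(4*S) <= 9/100 - s*S^+2/2 - (1-2*s)^+3/27.
  by rewrite ler_pdivrMr //; nra.
have h4 : p + (d - s) <= 1 - 2*s by lra.
have h5 : (2*(p/2) + (d-s))^+3 <= (1-2*s)^+3.
  apply: lerXn2r; rewrite ?nnegrE; nra.
nra.
Qed.
Lemma realF (R : rcfType) (a b u v d S : R) : 0 <= a -> 0 <= b -> 0 <= u -> 0 <= v ->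
  0 <= d -> u + v + d <= S -> a + b + S = 1 ->
  a*b*S + (a+b)*S^+2/2 - (a+b)*(u^+2+v^+2)/2 - b*d^+2/2 + u*v*d <= Num.sqrt 3 / 18.
Proof.
move=> a0 b0 u0 v0 d0 hS e.
have S0 : 0 <= S by lra.
have h1 : u*v <= (u^+2+v^+2)/2 by have := sqr_ge0 (u-v); nra.
have h2 : 0 <= u^+2+v^+2 by nra.
case: (lerP d (a+b)) => hd.
- have h3 : u*v*d <= (a+b)*(u^+2+v^+2)/2.
    apply: le_trans (_ : (u^+2+v^+2)/2 * d <= _); first by apply: ler_wpM2r.
    have hd2 : 0 <= a + b - d by lra.
    have := mulr_ge0 h2 hd2; nra.
  have := mulr_ge0 b0 (sqr_ge0 d); have := @gbound R a b S a0 b0 S0 e; lra.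
- have hp : 0 <= u + v by lra.
  have hS2 : (u + v) + d <= S by lra.
  have := @caseB R a b (u+v) d S a0 b0 hp d0 hS2 e (ltW hd).
  have h4 : u*v <= (u+v)^+2/4 by have := sqr_ge0 (u-v); nra.
  have h5 : u*v*d <= (u+v)^+2 * d / 4.
    have -> : (u+v)^+2 * d / 4 = ((u+v)^+2/4) * d by rewrite mulrAC.
    by apply: ler_wpM2r.
  have h6 : (a+b)*(u+v)^+2/4 <= (a+b)*(u^+2+v^+2)/2.
    rewrite -!mulrA; apply: ler_wpM2l; first lra.
    have := sqr_ge0 (u-v); nra.
  have c0 : 0 <= Num.sqrt (3:R) by rewrite sqrtr_ge0.
  have c2 : Num.sqrt (3:R) ^+ 2 = 3 by rewrite sqr_sqrtr.
  have h7 : 9/100 <= Num.sqrt (3:R) / 18 by nra.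
  lra.
Qed.

Ltac seteq := apply/setP; let w := fresh "w" in intro w; rewrite !inE;
  by do ?[case: eqP => ? /=].

Lemma sort3 n (x y z : 'I_n) : x != y -> x != z -> y != z ->
  exists i j k : 'I_n, [/\ (val i < val j)%N, (val j < val k)%N & [set x; y; z] = [set i; j; k]].
Proof.
move=> xy xz yz.
have vxy : val x != val y by [].
have vxz : val x != val z by [].
have vyz : val y != val z by [].
case: (ltngtP (val x) (val y)) => hxy; last by rewrite hxy eqxx in vxy.
- case: (ltngtP (val y) (val z)) => hyz; last by rewrite hyz eqxx in vyz.
  + by exists x, y, z.
  + case: (ltngtP (val x) (val z)) => hxz; last by rewrite hxz eqxx in vxz.
    * by exists x, z, y; split => //; seteq.
    * by exists z, x, y; split => //; seteq.
- case: (ltngtP (val y) (val z)) => hyz; last by rewrite hyz eqxx in vyz.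
  + case: (ltngtP (val x) (val z)) => hxz; last by rewrite hxz eqxx in vxz.
    * by exists y, x, z; split => //; seteq.
    * by exists y, z, x; split => //; seteq.
  + by exists z, y, x; split => //; seteq.
Qed.

Lemma card3P n (e : {set 'I_n}) : #|e| = 3%N ->
  exists x y z : 'I_n, [/\ x != y, x != z, y != z & e = [set x; y; z]].
Proof.
move=> he.
have : (0 < #|e|)%N by rewrite he.
case/card_gt0P => x xe.
have : #|e :\ x| == 2%N by move: he; rewrite (cardsD1 x e) xe add1n => -[->].
case/cards2P => y [z [yz ed]].
have ye : y \in e :\ x by rewrite ed !inE eqxx.
have ze : z \in e :\ x by rewrite ed !inE eqxx orbT.
exists x, y, z; split => //.
- by move: ye; rewrite !inE eq_sym => /andP[].
- by move: ze; rewrite !inE eq_sym => /andP[].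
- rewrite -(setD1K xe) ed; seteq.
Qed.

Lemma sum_cover (R : numDomainType) (I J : finType) (f : I -> J) (A : {pred I})
  (B : {pred J}) (G : J -> R) :
  (forall y, 0 <= G y) -> (forall y, y \in B -> exists2 x, x \in A & f x = y) ->
  \sum_(y in B) G y <= \sum_(x in A) G (f x).
Proof.
move=> G0 cov.
rewrite (partition_big f (fun _ => true)) //=.
apply: le_trans (_ : _ <= \sum_(y in B) \sum_(x in A | f x == y) G (f x)) _.
  apply: ler_sum => y yB; case: (cov y yB) => x xA fx.
  rewrite (bigD1 x) /=; last by rewrite xA fx eqxx.
  by rewrite fx lerDl sumr_ge0.
rewrite [X in _ <= X](bigID (fun y => y \in B)) /= lerDl.
by apply: sumr_ge0 => y _; apply: sumr_ge0.
Qed.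

Lemma labE n (i : 'I_n) : lab i = (nat_of_ord i).+1.
Proof. by []. Qed.

Lemma in3 n (a b c w : 'I_n) : w \in [set a; b; c] ->
  nat_of_ord w = nat_of_ord a \/ nat_of_ord w = nat_of_ord b \/ nat_of_ord w = nat_of_ord c.
Proof.
rewrite !inE => /orP [/orP [] | ] /eqP ->; tauto.
Qed.

Lemma classify n (D : {set 'I_n}) (hD : forall i, i \in D -> (3 < nat_of_ord i)%N)
  (i j k : 'I_n) : (nat_of_ord i < nat_of_ord j)%N -> (nat_of_ord j < nat_of_ord k)%N -> [set i; j; k] \in H2 D ->
  [\/ nat_of_ord i = 0%N, nat_of_ord i = 1%N /\ ~~ ((j \in D) && (k \in D))
    | [/\ nat_of_ord i = 2%N, nat_of_ord j = 3%N & k \in D]].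
Proof.
move=> ij jk; rewrite inE => /orP [/andP [hB hnot] | hE].
- move: hB; rewrite inE => /andP [_ /existsP [w /andP [win hw]]].
  have hw' : (nat_of_ord w <= 1)%N.
    move: hw; rewrite !labE => /orP [] /eqP h; lia.
  have vi : (nat_of_ord i <= 1)%N by case: (in3 win) => h; lia.
  case: (nat_of_ord i =P 0%N) => [h|h]; first by constructor 1.
  constructor 2; split; first by lia.
  apply/negP => /andP [jD kD]; apply: (negP hnot).
  apply/existsP; exists i; apply/existsP; exists j; rewrite jD /=.
  apply/existsP; exists k; rewrite kD /= labE.
  have -> : (nat_of_ord i).+1 = 2%N by lia.
  rewrite eqxx /=; apply/andP; split => //.
  by apply/eqP => e; move: jk; rewrite e ltnn.
- case/existsP: hE => u /existsP [w /existsP [i' /and4P [i'D hu hw /eqP E]]].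
  move: hu hw; rewrite !labE => /eqP hu /eqP hw.
  have hi' := hD _ i'D.
  have mi : i \in [set u; w; i'] by rewrite -E !inE eqxx.
  have mj : j \in [set u; w; i'] by rewrite -E !inE eqxx orbT.
  have mk : k \in [set u; w; i'] by rewrite -E !inE eqxx !orbT.
  have mu : u \in [set i; j; k] by rewrite E !inE eqxx.
  have mw : w \in [set i; j; k] by rewrite E !inE eqxx orbT.
  move: (in3 mi) (in3 mj) (in3 mk) (in3 mu) (in3 mw) => ci cj ck cu cw.
  have vk : nat_of_ord k = nat_of_ord i' by lia.
  constructor 3; split; [lia | lia |].
  by rewrite (val_inj vk).
Qed.

Definition E2 (R : numDomainType) n (Q : pred 'I_n) (x : 'I_n -> R) : R :=
  \sum_j \sum_k (if Q j && Q k && (nat_of_ord j < nat_of_ord k)%N then x j * x k else 0).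

Lemma E2_id (R : numDomainType) n (Q : pred 'I_n) (x : 'I_n -> R) :
  2 * E2 Q x = (\sum_j (if Q j then x j else 0))^+2 - \sum_j (if Q j then x j ^+ 2 else 0).
Proof.
pose y j := if Q j then x j else 0.
have e1 : forall j k, (if Q j && Q k && (nat_of_ord j < nat_of_ord k)%N then x j * x k else 0)
    = if (nat_of_ord j < nat_of_ord k)%N then y j * y k else 0.
  by move=> j k; rewrite /y; case: (Q j); case: (Q k); case: ifP; rewrite ?mulr0 ?mul0r.
have e2 : forall j, (if Q j then x j ^+ 2 else 0) = y j ^+ 2.
  by move=> j; rewrite /y; case: (Q j); rewrite ?expr0n.
have sp : forall j k, y j * y k =
   (if (nat_of_ord j < nat_of_ord k)%N then y j * y k else 0)
 + (if j == k then y j ^+ 2 else 0)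
 + (if (nat_of_ord k < nat_of_ord j)%N then y k * y j else 0).
  move=> j k; case: (ltngtP (nat_of_ord j) (nat_of_ord k)) => h.
  - have h2 : (j == k) = false by apply/negbTE; apply/eqP => e; move: h; rewrite e ltnn.
    by rewrite h2 !addr0.
  - have h2 : (j == k) = false by apply/negbTE; apply/eqP => e; move: h; rewrite e ltnn.
    by rewrite h2 !add0r mulrC.
  - have e : j = k by apply: val_inj.
    by rewrite e eqxx ?add0r ?addr0 expr2.
rewrite /E2 (eq_bigr _ (fun j _ => eq_bigr _ (fun k _ => e1 j k))).
rewrite (eq_bigr _ (fun j _ => e2 j)).
have -> : \sum_j (if Q j then x j else 0) = \sum_j y j by [].
rewrite expr2 big_distrlr /=.
have -> : \sum_i \sum_j y i * y j =
   \sum_i \sum_j (if (nat_of_ord i < nat_of_ord j)%N then y i * y j else 0)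
 + \sum_i \sum_j (if i == j then y i ^+ 2 else 0)
 + \sum_i \sum_j (if (nat_of_ord j < nat_of_ord i)%N then y j * y i else 0).
  rewrite -!big_split /=; apply: eq_bigr => i _; rewrite -!big_split /=.
  by apply: eq_bigr => j _; exact: sp.
have -> : \sum_i \sum_(k < n) (if i == k then y i ^+ 2 else 0) = \sum_i y i ^+ 2.
  apply: eq_bigr => i _; rewrite -big_mkcond /=.
  by rewrite (big_pred1 i) // => k; rewrite eq_sym.
have -> : \sum_(i < n) \sum_(k < n) (if (nat_of_ord k < nat_of_ord i)%N then y k * y i else 0)
   = \sum_(i < n) \sum_(k < n) (if (nat_of_ord i < nat_of_ord k)%N then y i * y k else 0).
  by rewrite exchange_big.
ring.
Qed.

Definition sQ (R : numDomainType) n (Q : pred 'I_n) (x : 'I_n -> R) (j k : 'I_n) : R :=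
  if Q j && Q k && (nat_of_ord j < nat_of_ord k)%N then x j * x k else 0.
Definition cif (R : numDomainType) n (P : pred 'I_n) (x : 'I_n -> R) (j : 'I_n) : R :=
  if P j then x j else 0.

Lemma prod3 (R : numDomainType) n (x : 'I_n -> R) (i j k : 'I_n) :
  (nat_of_ord i < nat_of_ord j)%N -> (nat_of_ord j < nat_of_ord k)%N ->
  \prod_(l in [set i; j; k]) x l = x i * x j * x k.
Proof.
move=> ij jk.
have nij : i != j by apply/eqP => e; move: ij; rewrite e ltnn.
have njk : j != k by apply/eqP => e; move: jk; rewrite e ltnn.
have nik : i != k by apply/eqP => e; move: (ltn_trans ij jk); rewrite e ltnn.
have -> : [set i; j; k] = i |: (j |: [set k]) by apply/setP => w; rewrite !inE orbA.
rewrite big_setU1 /=; last by rewrite !inE negb_or nij nik.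
rewrite big_setU1 /=; last by rewrite !inE njk.
by rewrite big_set1 mulrA.
Qed.

Lemma sum_if1 (R : numDomainType) n (F : 'I_n -> R) (i : 'I_n) (m : nat) :
  nat_of_ord i = m -> \sum_j (if nat_of_ord j == m then F j else 0) = F i.
Proof.
move=> hm; rewrite (bigD1 i) //= hm eqxx big1 ?addr0 // => j ji.
case: eqP => // h; case/eqP: ji; apply: val_inj => /=; lia.
Qed.

Lemma split0 (R : numDomainType) n (F : 'I_n -> R) (i : 'I_n) :
  nat_of_ord i = 0%N -> \sum_j F j = F i + \sum_j (if (0 < nat_of_ord j)%N then F j else 0).
Proof.
move=> hi; rewrite (bigD1 i) //= [X in _ = _ + X](bigD1 i) //= hi /= add0r.
congr (_ + _); apply: eq_bigr => j ji.
case: ifP => // /negbT; rewrite -leqNgt leqn0 => /eqP h.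
by case/eqP: ji; apply: val_inj => /=; lia.
Qed.

Lemma splitS (R : numDomainType) n (F : 'I_n -> R) (i : 'I_n) (lo : nat) :
  nat_of_ord i = lo.+1 -> \sum_j (if (lo < nat_of_ord j)%N then F j else 0)
    = F i + \sum_j (if (lo.+1 < nat_of_ord j)%N then F j else 0).
Proof.
move=> hi; rewrite (bigD1 i) //= [X in _ = _ + X](bigD1 i) //= hi ltnSn ltnn add0r.
congr (_ + _); apply: eq_bigr => j ji.
have : nat_of_ord j != lo.+1.
  by apply/eqP => h; case/eqP: ji; apply: val_inj => /=; lia.
move=> h; case: ifP; case: ifP => //; lia.
Qed.

Definition Wt (R : numDomainType) n (D : {set 'I_n}) (x : 'I_n -> R) (i j k : 'I_n) : R :=
  cif (fun l => nat_of_ord l == 0%N) x i * sQ (fun l => (0 < nat_of_ord l)%N) x j k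
+ cif (fun l => nat_of_ord l == 1%N) x i *
    (sQ (fun l => (1 < nat_of_ord l)%N) x j k - sQ (fun l => l \in D) x j k)
+ cif (fun l => nat_of_ord l == 2%N) x i * cif (fun l => nat_of_ord l == 3%N) x j
    * cif (fun l => l \in D) x k.

Lemma cif_ge0 (R : numDomainType) n (P : pred 'I_n) (x : 'I_n -> R) j :
  (forall i, 0 <= x i) -> 0 <= cif P x j.
Proof. by move=> x0; rewrite /cif; case: ifP. Qed.

Lemma sQ_ge0 (R : numDomainType) n (P : pred 'I_n) (x : 'I_n -> R) j k :
  (forall i, 0 <= x i) -> 0 <= sQ P x j k.
Proof. by move=> x0; rewrite /sQ; case: ifP => // _; apply: mulr_ge0. Qed.

Lemma Wt_ge0 (R : numDomainType) n (D : {set 'I_n}) (x : 'I_n -> R) i j k :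
  (forall i, i \in D -> (3 < nat_of_ord i)%N) -> (forall i, 0 <= x i) -> 0 <= Wt D x i j k.
Proof.
move=> hD x0; rewrite /Wt.
apply: addr_ge0; [apply: addr_ge0|].
- by apply: mulr_ge0; [apply: cif_ge0 | apply: sQ_ge0].
- apply: mulr_ge0; first exact: cif_ge0.
  rewrite subr_ge0 /sQ.
  case hj: (j \in D); case hk: (k \in D) => /=; last first.
  + by case: ifP => // _; apply: mulr_ge0.
  + by case: ifP => // _; apply: mulr_ge0.
  + by case: ifP => // _; apply: mulr_ge0.
  have h1 : (1 < nat_of_ord j)%N by have := hD _ hj; lia.
  have h2 : (1 < nat_of_ord k)%N by have := hD _ hk; lia.
  by rewrite h1 h2.
- by apply: mulr_ge0; [apply: mulr_ge0|]; apply: cif_ge0.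
Qed.

Lemma Wt_bound (R : numDomainType) n (D : {set 'I_n}) (x : 'I_n -> R) i j k :
  (forall i, i \in D -> (3 < nat_of_ord i)%N) -> (forall i, 0 <= x i) ->
  (nat_of_ord i < nat_of_ord j)%N -> (nat_of_ord j < nat_of_ord k)%N ->
  [set i; j; k] \in H2 D -> x i * x j * x k <= Wt D x i j k.
Proof.
move=> hD x0 ij jk hH.
rewrite /Wt /cif /sQ.
have jk' : (nat_of_ord j < nat_of_ord k)%N = true by [].
case: (classify hD ij jk hH) => [h | [h hnd] | [h1 h2 kD]].
- have e0 : (nat_of_ord i == 0%N) = true by apply/eqP.
  have e1 : (nat_of_ord i == 1%N) = false by apply/eqP; lia.
  have e2 : (nat_of_ord i == 2%N) = false by apply/eqP; lia.
  have e3 : (0 < nat_of_ord j)%N = true by lia.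
  have e4 : (0 < nat_of_ord k)%N = true by lia.
  rewrite e0 e1 e2 e3 e4 jk' /=.
  rewrite !mul0r !addr0 mulrA; exact: lexx.
- have e0 : (nat_of_ord i == 0%N) = false by apply/eqP; lia.
  have e1 : (nat_of_ord i == 1%N) = true by apply/eqP; lia.
  have e2 : (nat_of_ord i == 2%N) = false by apply/eqP; lia.
  have e3 : (1 < nat_of_ord j)%N = true by lia.
  have e4 : (1 < nat_of_ord k)%N = true by lia.
  rewrite e0 e1 e2 e3 e4 jk' (negbTE hnd) /=.
  rewrite !mul0r subr0 add0r addr0 mulrA; exact: lexx.
- have e0 : (nat_of_ord i == 0%N) = false by apply/eqP; lia.
  have e1 : (nat_of_ord i == 1%N) = false by apply/eqP; lia.
  have e2 : (nat_of_ord i == 2%N) = true by apply/eqP; lia.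
  have e3 : (nat_of_ord j == 3%N) = true by apply/eqP; lia.
  rewrite e0 e1 e2 e3 kD /=.
  rewrite !mul0r !add0r; exact: lexx.
Qed.

Lemma sumW (R : numDomainType) n (D : {set 'I_n}) (x : 'I_n -> R) :
  \sum_i \sum_j \sum_k Wt D x i j k =
    (\sum_i cif (fun l => nat_of_ord l == 0%N) x i) * E2 (fun l => (0 < nat_of_ord l)%N) x
  + (\sum_i cif (fun l => nat_of_ord l == 1%N) x i) *
      (E2 (fun l => (1 < nat_of_ord l)%N) x - E2 (fun l => l \in D) x)
  + (\sum_i cif (fun l => nat_of_ord l == 2%N) x i) * (\sum_i cif (fun l => nat_of_ord l == 3%N) x i)
      * (\sum_i cif (fun l => l \in D) x i).
Proof.
have L1 : forall (al : 'I_n -> R) (be : 'I_n -> 'I_n -> R),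
    \sum_i \sum_j \sum_k al i * be j k = (\sum_i al i) * \sum_j \sum_k be j k.
  move=> al be; rewrite mulr_suml; apply: eq_bigr => i _; rewrite mulr_sumr.
  by apply: eq_bigr => j _; rewrite mulr_sumr.
have L2 : forall (al be ga : 'I_n -> R),
    \sum_i \sum_j \sum_k al i * be j * ga k = (\sum_i al i) * (\sum_j be j) * \sum_k ga k.
  move=> al be ga.
  have -> : \sum_i \sum_j \sum_k al i * be j * ga k = \sum_i \sum_j \sum_k al i * (be j * ga k).
    by apply: eq_bigr => i _; apply: eq_bigr => j _; apply: eq_bigr => k _; exact: (esym (mulrA _ _ _)).
  by rewrite L1 -big_distrlr /= mulrA.
have -> : \sum_i \sum_j \sum_k Wt D x i j k =
   \sum_i \sum_j \sum_k (cif (fun l => nat_of_ord l == 0%N) x i * sQ (fun l => (0 < nat_of_ord l)%N) x j k)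
 + \sum_i \sum_j \sum_k (cif (fun l => nat_of_ord l == 1%N) x i *
    (sQ (fun l => (1 < nat_of_ord l)%N) x j k - sQ (fun l => l \in D) x j k))
 + \sum_i \sum_j \sum_k (cif (fun l => nat_of_ord l == 2%N) x i * cif (fun l => nat_of_ord l == 3%N) x j
    * cif (fun l => l \in D) x k).
  rewrite -!big_split /=; apply: eq_bigr => i _; rewrite -!big_split /=.
  by apply: eq_bigr => j _; rewrite -!big_split /=.
rewrite L1 L1 L2; congr (_ * _ + _ * _ + _).
rewrite /E2 -sumrB; apply: eq_bigr => j _; rewrite -sumrB.
by apply: eq_bigr.
Qed.

Lemma final_comb (R : rcfType) (a b u v d S Z4 ZD e1 e2 eD : R) :
  0 <= a -> 0 <= b -> 0 <= u -> 0 <= v -> 0 <= d -> ZD <= Z4 -> 0 <= ZD ->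
  u + v + d <= S -> a + b + S = 1 ->
  2 * e1 = (b + S)^+2 - (b^+2 + (u^+2 + v^+2 + Z4)) ->
  2 * e2 = S^+2 - (u^+2 + v^+2 + Z4) -> 2 * eD = d^+2 - ZD ->
  a * e1 + b * (e2 - eD) + u * v * d <= Num.sqrt 3 / 18.
Proof.
move=> a0 b0 u0 v0 d0 hZ ZD0 hS e E1 E2' ED.
have := realF a0 b0 u0 v0 d0 hS e.
have h1 : 0 <= a * Z4 by apply: mulr_ge0 => //; lra.
have h2 : 0 <= b * (Z4 - ZD) by apply: mulr_ge0 => //; lra.
have -> : e1 = ((b + S)^+2 - (b^+2 + (u^+2 + v^+2 + Z4))) / 2 by rewrite -E1; field.
have -> : e2 = (S^+2 - (u^+2 + v^+2 + Z4)) / 2 by rewrite -E2'; field.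
have -> : eD = (d^+2 - ZD) / 2 by rewrite -ED; field.
nra.
Qed.

Theorem lemma4p11 (R : rcfType) (n : nat) (D : {set 'I_n}) :
  (6 <= n)%N ->
  (forall i, i \in D -> (4 < lab i)%N) ->
  (2 <= #|D|)%N ->
  forall x : 'I_n -> R, in_simplex x ->
    lagr_val (H2 D) x <= Num.sqrt 3 / 18.
Proof.
move=> hn hDl _ x [x0 xs].
have hD : forall i, i \in D -> (3 < nat_of_ord i)%N.
  by move=> i /hDl; rewrite labE.
have n0 : (0 < n)%N by lia.
have n1 : (1 < n)%N by lia.
have n2 : (2 < n)%N by lia.
have n3 : (3 < n)%N by lia.
pose i0 := Ordinal n0. pose i1 := Ordinal n1.
pose i2 := Ordinal n2. pose i3 := Ordinal n3.
pose G := fun e : {set 'I_n} => \prod_(i in e) x i.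
pose f := fun t : 'I_n * 'I_n * 'I_n => [set t.1.1; t.1.2; t.2].
pose A := [pred t : 'I_n * 'I_n * 'I_n | [&& (nat_of_ord t.1.1 < nat_of_ord t.1.2)%N,
            (nat_of_ord t.1.2 < nat_of_ord t.2)%N & f t \in H2 D]].
have step1 : lagr_val (H2 D) x <= \sum_(t in A) G (f t).
  apply: sum_cover.
  - by move=> e; apply: prodr_ge0 => i _; exact: x0.
  - move=> e eH; move: (eH); rewrite inE => /orP [/andP [eB _] | hE].
    + move: eB; rewrite inE => /andP [/eqP c3 _].
      case: (card3P c3) => p [q [r [pq pr qr ee]]].
      case: (sort3 pq pr qr) => i [j [k [ij jk es]]].
      exists ((i, j), k); last by rewrite /f /= ee es.
      by rewrite inE /= ij jk /= /f /= -es -ee.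
    + case/existsP: hE => u /existsP [w /existsP [i' /and4P [i'D hu hw /eqP E]]].
      exists ((u, w), i'); last by rewrite /f /= E.
      move: hu hw; rewrite !labE => /eqP hu /eqP hw.
      have := hD _ i'D => hi'.
      rewrite inE /=; apply/and3P; split; [lia | lia | by rewrite /f /= -E].
have step2 : \sum_(t in A) G (f t) <= \sum_t Wt D x t.1.1 t.1.2 t.2.
  apply: le_trans (_ : _ <= \sum_(t in A) Wt D x t.1.1 t.1.2 t.2) _.
    apply: ler_sum => t; rewrite inE => /and3P [ij jk hH].
    rewrite /G /f prod3 //; exact: Wt_bound.
  rewrite [X in _ <= X](bigID (fun t => t \in A)) /= lerDl.
  by apply: sumr_ge0 => t _; apply: Wt_ge0.
have step3 : \sum_t Wt D x t.1.1 t.1.2 t.2 = \sum_i \sum_j \sum_k Wt D x i j k.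
  rewrite -(pair_bigA _ (fun (ij : 'I_n * 'I_n) (k : 'I_n) => Wt D x ij.1 ij.2 k)) /=.
  by rewrite (pair_bigA _ (fun (i j : 'I_n) => \sum_k Wt D x i j k)).
rewrite sumW in step3.
have c0 : \sum_i cif (fun l => nat_of_ord l == 0%N) x i = x i0 by exact: sum_if1.
have c1 : \sum_i cif (fun l => nat_of_ord l == 1%N) x i = x i1 by exact: sum_if1.
have c2 : \sum_i cif (fun l => nat_of_ord l == 2%N) x i = x i2 by exact: sum_if1.
have c3 : \sum_i cif (fun l => nat_of_ord l == 3%N) x i = x i3 by exact: sum_if1.
rewrite c0 c1 c2 c3 in step3.
set d := \sum_i cif (fun l => l \in D) x i in step3.
set Y1 := \sum_j (if (0 < nat_of_ord j)%N then x j else 0).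
set Y2 := \sum_j (if (1 < nat_of_ord j)%N then x j else 0).
set Y3 := \sum_j (if (2 < nat_of_ord j)%N then x j else 0).
set Y4 := \sum_j (if (3 < nat_of_ord j)%N then x j else 0).
set Z1 := \sum_j (if (0 < nat_of_ord j)%N then x j ^+ 2 else 0).
set Z2 := \sum_j (if (1 < nat_of_ord j)%N then x j ^+ 2 else 0).
set Z3 := \sum_j (if (2 < nat_of_ord j)%N then x j ^+ 2 else 0).
set Z4 := \sum_j (if (3 < nat_of_ord j)%N then x j ^+ 2 else 0).
set ZD := \sum_j (if j \in D then x j ^+ 2 else 0).
have r0 : 1 = x i0 + Y1 by rewrite -xs; exact: split0.
have r1 : Y1 = x i1 + Y2 by exact: splitS.
have r2 : Y2 = x i2 + Y3 by exact: splitS.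
have r3 : Y3 = x i3 + Y4 by exact: splitS.
have q1 : Z1 = x i1 ^+ 2 + Z2 by exact: (splitS (fun j => x j ^+ 2)).
have q2 : Z2 = x i2 ^+ 2 + Z3 by exact: (splitS (fun j => x j ^+ 2)).
have q3 : Z3 = x i3 ^+ 2 + Z4 by exact: (splitS (fun j => x j ^+ 2)).
have dY : d <= Y4.
  apply: ler_sum => j _; rewrite /cif.
  case: ifP => jD; last by case: ifP.
  by rewrite (hD _ jD).
have dZ : ZD <= Z4.
  apply: ler_sum => j _.
  case: ifP => jD; last by case: ifP => // _; exact: sqr_ge0.
  by rewrite (hD _ jD).
have ZD0 : 0 <= ZD by apply: sumr_ge0 => j _; case: ifP => // _; exact: sqr_ge0.
have d0 : 0 <= d by apply: sumr_ge0 => j _; exact: cif_ge0.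
have E1 : 2 * E2 (fun l => (0 < nat_of_ord l)%N) x = Y1 ^+ 2 - Z1 by exact: E2_id.
have E2' : 2 * E2 (fun l => (1 < nat_of_ord l)%N) x = Y2 ^+ 2 - Z2 by exact: E2_id.
have ED : 2 * E2 (fun l => l \in D) x = d ^+ 2 - ZD by exact: E2_id.
apply: (le_trans step1); apply: (le_trans step2); rewrite step3.
apply: (final_comb (S := Y2) (Z4 := Z4) (ZD := ZD)) => //; try lra.
rewrite E1 -r1 q1 q2 q3; ring.
Qed.
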